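(* Let $t$ be an integer with $m=2t+1\geq 11$ and $n=2^m+1$. Put $\delta_1=\frac{n}{3}$, $\delta_2=\frac{n-3}{6}$, $\delta_3=\delta_2-2$, $\delta_4=\delta_2-8$, $\delta_5=\delta_2-10$. Then $\delta_1>\delta_2>\delta_3>\delta_4>\delta_5$ are respectively the first, second, third, fourth and fifth largest coset leaders modulo $n$ (i.e. they are coset leaders, and every integer $x$ with $\delta_5<x\leq n-1$ that is a coset leader belongs to $\{\delta_1,\delta_2,\delta_3,\delta_4\}$).
   Context: For $n=2^m+1$ and an integer $x$, the 2-cyclotomic coset of $x$ modulo $n$ is $C_x=\{x\cdot 2^{j} \bmod n : j\geq 0\}\subseteq\{0,1,\dots,n-1\}$. For $0\leq x\leq n-1$, ''$x$ is a coset leader'' means that $x$ is the smallest element of $C_x$. *)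

(* Defs.v *)
From mathcomp Require Import all_boot.
Set Implicit Arguments. Unset Strict Implicit. Unset Printing Implicit Defensive.

Definition in_coset (n x y : nat) : Prop := exists j : nat, y = (x * 2 ^ j) %% n.

Definition coset_leader (n x : nat) : Prop :=
  x < n /\ forall y, in_coset n x y -> x <= y.

(* Main.v *)
Require Import Defs.
From mathcomp Require Import all_boot.
From mathcomp Require Import zify.

Lemma mod_eq a n Q R : a = Q * n + R -> R < n -> a %% n = R.
Proof. by move=> -> H; rewrite modnMDl modn_small. Qed.

Lemma pow4mod3 i : exists u, 4 ^ i = 3 * u + 1.
Proof.
elim: i => [|i [u Hu]]; first by exists 0.
exists (4 * u + 1); rewrite expnS Hu; lia.
Qed.

Lemma pow2mod3 k : 2 ^ k %% 3 = 1 \/ 2 ^ k %% 3 = 2.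
Proof.
elim: k => [|k IH]; first by left.
rewrite expnS; lia.
Qed.

Lemma pow2m_sq n m : n = 2 ^ m + 1 -> 2 ^ (2 * m) = (n - 2) * n + 1.
Proof.
move=> Hn; have -> : 2 ^ (2 * m) = 2 ^ m * 2 ^ m by rewrite mul2n -addnn expnD.
rewrite Hn; nia.
Qed.

Lemma r_period n m x j : n = 2 ^ m + 1 ->
  (x * 2 ^ j) %% n = (x * 2 ^ (j %% (2 * m))) %% n.
Proof.
move=> Hn.
have Hc : (2 ^ (2 * m)) ^ (j %/ (2 * m)) %% n = 1.
  rewrite -modnXm (@pow2m_sq _ _ Hn) modnMDl.
  have n1 : 1 < n by rewrite Hn; have := expn_gt0 2 m; lia.
  by rewrite (modn_small n1) exp1n (modn_small n1).
have -> : 2 ^ j = (2 ^ (2 * m)) ^ (j %/ (2 * m)) * 2 ^ (j %% (2 * m)).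
  by rewrite -expnM (mulnC (2 * m)) -expnD -divn_eq.
by rewrite mulnCA -modnMml Hc mul1n.
Qed.

Lemma r_neg n m x k : n = 2 ^ m + 1 -> 0 < (x * 2 ^ k) %% n ->
  (x * 2 ^ (k + m)) %% n = n - (x * 2 ^ k) %% n.
Proof.
move=> Hn Hr.
have -> : x * 2 ^ (k + m) = (x * 2 ^ k) * (n - 1) by rewrite expnD mulnA Hn addnK.
rewrite -modnMml.
have Hlt : (x * 2 ^ k) %% n < n by rewrite ltn_mod Hn addn1.
move: Hr Hlt; set r := (x * 2 ^ k) %% n => Hr Hlt.
apply: (@mod_eq _ _ (r - 1)); nia.
Qed.

Lemma r_step n x k : (x * 2 ^ k.+1) %% n = (2 * ((x * 2 ^ k) %% n)) %% n.
Proof. by rewrite modnMmr expnS mulnCA. Qed.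

Lemma leader_bounds n m x k : n = 2 ^ m + 1 -> coset_leader n x ->
  x <= (x * 2 ^ k) %% n /\ (x * 2 ^ k) %% n + x <= n.
Proof.
move=> Hn [Hx H]; split; first by apply: H; exists k.
case: (posnP ((x * 2 ^ k) %% n)) => Hr; first by rewrite Hr; lia.
have := H ((x * 2 ^ (k + m)) %% n) (ex_intro _ _ erefl).
rewrite (@r_neg _ _ _ _ Hn Hr).
have : (x * 2 ^ k) %% n < n by rewrite ltn_mod Hn addn1.
lia.
Qed.

Lemma leader_of n m x : n = 2 ^ m + 1 -> 0 < m -> 0 < x < n ->
  (forall k, k < m -> x <= (x * 2 ^ k) %% n /\ (x * 2 ^ k) %% n + x <= n) ->
  coset_leader n x.
Proof.
move=> Hn Hm /andP[Hx0 Hxn] B; split => // y [j ->].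
rewrite (r_period _ _ _ _ Hn).
have : j %% (2 * m) < 2 * m by rewrite ltn_mod; lia.
set b := j %% (2 * m) => Hb.
case: (ltnP b m) => Hbm; first by case: (B b Hbm).
have -> : b = (b - m) + m by rewrite subnK.
have [B1 B2] := B (b - m) ltac:(lia).
rewrite (@r_neg _ _ _ _ Hn); lia.
Qed.

Lemma mod_sub a n : n <= a < 2 * n -> a %% n = a - n.
Proof. move=> H; apply: (@mod_eq _ _ 1); lia. Qed.

Lemma odd_track n q x :
  (forall k, x <= (x * 2 ^ k) %% n /\ (x * 2 ^ k) %% n + x <= n) ->
  n = 3 * q -> q < 2 * x -> x < q ->
  forall i, q <= (x * 2 ^ (2 * i + 1)) %% n < 2 * q.
Proof.
move=> B Hn H1 H2; elim => [|i IH].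
  rewrite muln0 add0n expn1 modn_small; lia.
have E : 2 * i.+1 + 1 = (2 * i + 1).+1.+1 by lia.
rewrite E r_step r_step.
have [B1 B2] := B (2 * i + 1).+1.
rewrite r_step in B1 B2.
move: IH B1 B2; set y := (x * 2 ^ (2 * i + 1)) %% n => IH B1 B2.
case: (ltnP (2 * y) n) => Hy.
- rewrite (modn_small Hy) in B1 B2 *.
  rewrite mod_sub; lia.
- have Ey : (2 * y) %% n = 2 * y - n by rewrite mod_sub; lia.
  rewrite Ey in B1 B2 *.
  rewrite modn_small; lia.
Qed.

Lemma fwd n q x g i : n = 3 * q -> 2 * x + (2 * g + 1) = q ->
  2 * (2 * g + 1) * 4 ^ i <= q + (2 * g + 1) ->
  (x <= (x * 2 ^ (2 * i + 1)) %% n /\ (x * 2 ^ (2 * i + 1)) %% n + x <= n) /\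
  (x <= (x * 2 ^ (2 * i + 2)) %% n /\ (x * 2 ^ (2 * i + 2)) %% n + x <= n).
Proof.
move=> Hn Hq Hb.
have [u Hu] := pow4mod3 i.
have E1 : 2 ^ (2 * i + 1) = 2 * 4 ^ i by rewrite expnD expnM mulnC.
have E2 : 2 ^ (2 * i + 2) = 4 * 4 ^ i by rewrite expnD expnM mulnC.
rewrite E1 E2 Hu in Hb *.
rewrite (@mod_eq _ _ u (q - (2 * g + 1) * (3 * u + 1))); try nia.
rewrite (@mod_eq _ _ (2 * u) (2 * q - 2 * (2 * g + 1) * (3 * u + 1))); try nia.
Qed.

Lemma wit n m x y c a : n = 2 ^ m + 1 -> y < n -> c <= 2 * m ->
  (y * 2 ^ c) %% n = (x * 2 ^ a) %% n -> in_coset n x y.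
Proof.
move=> Hn Hy Hc E; exists (a + (2 * m - c)).
rewrite expnD mulnA -modnMml -E modnMml -mulnA -expnD subnKC //.
have n1 : 1 < n by rewrite Hn; have := expn_gt0 2 m; lia.
rewrite (@pow2m_sq _ _ Hn) -modnMmr modnMDl (modn_small n1) muln1 modn_small //.
Qed.

Lemma lead_gen t h P g x :
  5 <= t -> 4 ^ (t - 3) = P -> 4 * P = 3 * h + 1 ->
  2 ^ (2 * t + 1) + 1 = 96 * h + 33 -> x = 16 * h + 5 - g -> g <= 10 -> 21 <= h ->
  (forall j, 1 <= j <= 4 -> x <= (x * 2 ^ (2 * t + 1 - j)) %% (2 ^ (2 * t + 1) + 1)
        /\ (x * 2 ^ (2 * t + 1 - j)) %% (2 ^ (2 * t + 1) + 1) + x <= 2 ^ (2 * t + 1) + 1) ->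
  coset_leader (2 ^ (2 * t + 1) + 1) x.
Proof.
move=> Ht HP HPh En Ex Hg Hh Bk.
apply: (@leader_of _ (2 * t + 1)) => //; first lia.
  rewrite En; lia.
move=> k Hk.
case: (posnP k) => Hk0.
  rewrite Hk0 expn0 muln1 modn_small; rewrite En; lia.
case: (leqP k (2 * t - 4)) => Hk2.
  set i := k.-1 %/ 2.
  have Hi : i <= t - 3 by rewrite /i; lia.
  have H4 : 4 ^ i <= P by rewrite -HP; apply: leq_pexp2l.
  have [F1 F2] := @fwd (2 ^ (2 * t + 1) + 1) (32 * h + 11) x g i
     ltac:(rewrite En; lia) ltac:(lia) ltac:(nia).
  have [E|E] : k = 2 * i + 1 \/ k = 2 * i + 2 by rewrite /i; lia.
  - by rewrite E.
  - by rewrite E.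
have -> : k = 2 * t + 1 - (2 * t + 1 - k) by lia.
apply: Bk; lia.
Qed.

Lemma two_pow_cases t h j : 2 ^ (2 * t + 1) = 96 * h + 32 -> 1 <= j <= 4 -> j <= 2 * t + 1 ->
  let p := 2 ^ (2 * t + 1 - j) in
  [/\ j = 1 -> p = 48 * h + 16, j = 2 -> p = 24 * h + 8,
      j = 3 -> p = 12 * h + 4 & j = 4 -> p = 6 * h + 2].
Proof.
move=> E Hj Hjm p.
have Ep : p * 2 ^ j = 96 * h + 32 by rewrite /p -expnD subnK.
split=> Ej; rewrite Ej in Ep; lia.
Qed.

Theorem theorem3p5 (t : nat) :
  let m := 2 * t + 1 in
  let n := 2 ^ m + 1 in
  let d1 := n %/ 3 in
  let d2 := (n - 3) %/ 6 in
  let d3 := d2 - 2 in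
  let d4 := d2 - 8 in
  let d5 := d2 - 10 in
  11 <= m ->
  [/\ d1 > d2, d2 > d3, d3 > d4 & d4 > d5] /\
  [/\ coset_leader n d1, coset_leader n d2, coset_leader n d3,
      coset_leader n d4 & coset_leader n d5] /\
  (forall x, d5 < x <= n - 1 -> coset_leader n x ->
     x = d1 \/ x = d2 \/ x = d3 \/ x = d4).
Proof.
move=> m n d1 d2 d3 d4 d5 Hm.
have Hd1 : d1 = n %/ 3 by [].
have Hd2 : d2 = (n - 3) %/ 6 by [].
have Hd3 : d3 = d2 - 2 by [].
have Hd4 : d4 = d2 - 8 by [].
have Hd5 : d5 = d2 - 10 by [].
clearbody d5 d4 d3 d2 d1.
have Hn' : n = 2 ^ (2 * t + 1) + 1 by [].
have Hn : n = 2 ^ m + 1 by [].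
have Hm' : m = 2 * t + 1 by [].
clearbody n m.
have Ht : 5 <= t by lia.
have [h Hh] := pow4mod3 (t - 2).
have E4 : 4 ^ t = 16 * (3 * h + 1).
  by rewrite -Hh -(expnD 4 2) subnKC //; lia.
have E2m' : 2 ^ (2 * t + 1) = 96 * h + 32.
  by rewrite expnD expnM E4; lia.
have E2m : 2 ^ m = 96 * h + 32 by rewrite Hm'.
have En : n = 96 * h + 33 by rewrite Hn E2m; lia.
have En' : 2 ^ (2 * t + 1) + 1 = 96 * h + 33 by rewrite E2m'; lia.
have Hh21 : 21 <= h.
  have : 4 ^ 3 <= 4 ^ (t - 2) by apply: leq_pexp2l => //; lia.
  rewrite Hh; lia.
have HP : 4 * 4 ^ (t - 3) = 3 * h + 1.
  by rewrite -Hh -expnS; congr (4 ^ _); lia.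
have Ed1 : d1 = 32 * h + 11 by rewrite Hd1 En; lia.
have Ed2 : d2 = 16 * h + 5 by rewrite Hd2 En; lia.
have Ed3 : d3 = 16 * h + 3 by rewrite Hd3 Ed2; lia.
have Ed4 : d4 = 16 * h - 3 by rewrite Hd4 Ed2; lia.
have Ed5 : d5 = 16 * h - 5 by rewrite Hd5 Ed2; lia.
rewrite Ed1 Ed2 Ed3 Ed4 Ed5.
clear Hd1 Hd2 Hd3 Hd4 Hd5 Ed1 Ed2 Ed3 Ed4 Ed5 d1 d2 d3 d4 d5 E4.
split; first by split; lia.
split.
  split.
  -
    apply: (@leader_of _ m) => //; first lia.
      rewrite En; lia.
    move=> k _.
    have -> : n = (32 * h + 11) * 3 by rewrite En; lia.
    rewrite -muln_modr.
    by case: (pow2mod3 k) => ->; lia.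
  - rewrite Hn'; apply: (@lead_gen t h (4 ^ (t - 3)) 0) => //; try lia.
    move=> j Hj; have [P1 P2 P3 P4] := @two_pow_cases _ _ _ E2m' Hj ltac:(lia).
    rewrite En'.
    have [E|[E|[E|E]]] : j = 1 \/ j = 2 \/ j = 3 \/ j = 4 by lia.
    + rewrite (P1 E) (@mod_eq _ _ (8 * h + 2) (40 * h + 14)); lia.
    + rewrite (P2 E) (@mod_eq _ _ (4 * h + 1) (20 * h + 7)); lia.
    + rewrite (P3 E) (@mod_eq _ _ (2 * h) (58 * h + 20)); lia.
    + rewrite (P4 E) (@mod_eq _ _ h (29 * h + 10)); lia.
  - rewrite Hn'; apply: (@lead_gen t h (4 ^ (t - 3)) 2) => //; try lia.
    move=> j Hj; have [P1 P2 P3 P4] := @two_pow_cases _ _ _ E2m' Hj ltac:(lia).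
    rewrite En'.
    have [E|[E|[E|E]]] : j = 1 \/ j = 2 \/ j = 3 \/ j = 4 by lia.
    + rewrite (P1 E) (@mod_eq _ _ (8 * h + 1) (40 * h + 15)); lia.
    + rewrite (P2 E) (@mod_eq _ _ (4 * h) (68 * h + 24)); lia.
    + rewrite (P3 E) (@mod_eq _ _ (2 * h) (34 * h + 12)); lia.
    + rewrite (P4 E) (@mod_eq _ _ h (17 * h + 6)); lia.
  - rewrite Hn'; apply: (@lead_gen t h (4 ^ (t - 3)) 8) => //; try lia.
    move=> j Hj; have [P1 P2 P3 P4] := @two_pow_cases _ _ _ E2m' Hj ltac:(lia).
    rewrite En'.
    have [E|[E|[E|E]]] : j = 1 \/ j = 2 \/ j = 3 \/ j = 4 by lia.
    + rewrite (P1 E) (@mod_eq _ _ (8 * h - 2) (40 * h + 18)); lia.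
    + rewrite (P2 E) (@mod_eq _ _ (4 * h - 1) (20 * h + 9)); lia.
    + rewrite (P3 E) (@mod_eq _ _ (2 * h - 1) (58 * h + 21)); lia.
    + rewrite (P4 E) (@mod_eq _ _ (h - 1) (77 * h + 27)); lia.
  - rewrite Hn'; apply: (@lead_gen t h (4 ^ (t - 3)) 10) => //; try lia.
    move=> j Hj; have [P1 P2 P3 P4] := @two_pow_cases _ _ _ E2m' Hj ltac:(lia).
    rewrite En'.
    have [E|[E|[E|E]]] : j = 1 \/ j = 2 \/ j = 3 \/ j = 4 by lia.
    + rewrite (P1 E) (@mod_eq _ _ (8 * h - 3) (40 * h + 19)); lia.
    + rewrite (P2 E) (@mod_eq _ _ (4 * h - 2) (68 * h + 26)); lia.
    + rewrite (P3 E) (@mod_eq _ _ (2 * h - 1) (34 * h + 13)); lia.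
    + rewrite (P4 E) (@mod_eq _ _ (h - 1) (65 * h + 23)); lia.
move=> x /andP[Hx1 Hx2] HL.
have B := fun k => @leader_bounds n m x k Hn HL.
have [B0 _] := B 0.
have [_ B0'] := B 0.
rewrite expn0 muln1 modn_small in B0'; last by rewrite En; lia.
have [_ B1] := B 1.
rewrite expn1 modn_small in B1; last by rewrite En; lia.
have Hxq : x <= 32 * h + 11 by rewrite En in B1; lia.
case: (ltnP (32 * h + 11) (2 * x)) => Hmid.
  case: (ltnP x (32 * h + 11)) => Hxq2; last by left; lia.
  exfalso.
  have := @odd_track n (32 * h + 11) x B ltac:(rewrite En; lia) Hmid Hxq2 t.
  rewrite -Hm'.
  have Hx0 : (x * 2 ^ 0) %% n = x by rewrite expn0 muln1 modn_small //; lia.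
  have Hr := @r_neg _ _ x 0 Hn ltac:(rewrite Hx0; lia).
  rewrite add0n Hx0 in Hr; rewrite Hr; lia.
clear B0 B0' B1 Hxq HP Hh E2m' En' Hn'.
have Hlt : x < n by rewrite En; lia.
have Low : forall y, in_coset n x y -> x <= y by case: HL.
have [E|[E|[E|[E|[E|[E|[E|[E|[E|E]]]]]]]]] :
  x = 16*h+5 \/ x = 16*h+3 \/ x = 16*h-3 \/ x = 16*h+4 \/ x = 16*h+2 \/ x = 16*h \/
  x = 16*h-2 \/ x = 16*h-4 \/ x = 16*h+1 \/ x = 16*h-1 by lia.
- by right; left.
- by right; right; left.
- by right; right; right.
- have := Low (8*h+2) (@wit n m x (8*h+2) 1 0 Hn ltac:(rewrite En; lia) ltac:(lia)
     ltac:(rewrite expn0 expn1 E; congr (_ %% _); lia)); lia.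
- have := Low (8*h+1) (@wit n m x (8*h+1) 1 0 Hn ltac:(rewrite En; lia) ltac:(lia)
     ltac:(rewrite expn0 expn1 E; congr (_ %% _); lia)); lia.
- have := Low (8*h) (@wit n m x (8*h) 1 0 Hn ltac:(rewrite En; lia) ltac:(lia)
     ltac:(rewrite expn0 expn1 E; congr (_ %% _); lia)); lia.
- have := Low (8*h-1) (@wit n m x (8*h-1) 1 0 Hn ltac:(rewrite En; lia) ltac:(lia)
     ltac:(rewrite expn0 expn1 E; congr (_ %% _); lia)); lia.
- have := Low (8*h-2) (@wit n m x (8*h-2) 1 0 Hn ltac:(rewrite En; lia) ltac:(lia)
     ltac:(rewrite expn0 expn1 E; congr (_ %% _); lia)); lia.
- (* x = 16h+1, y = 10h+4, y*8 = n - x = x*2^m mod n *)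
  have Hr : (x * 2 ^ (0 + m)) %% n = n - x.
    rewrite (@r_neg _ _ _ 0 Hn) expn0 muln1 modn_small //; lia.
  rewrite add0n in Hr.
  have := Low (10*h+4) (@wit n m x (10*h+4) 3 m Hn ltac:(rewrite En; lia) ltac:(lia)
     ltac:(rewrite Hr En modn_small; [lia|lia])); lia.
- have := Low (14*h+4) (@wit n m x (14*h+4) 3 0 Hn ltac:(rewrite En; lia) ltac:(lia)
     ltac:(rewrite expn0 muln1 (modn_small Hlt) En (@mod_eq _ _ 1 x); lia)); lia.
Qed.
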